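(* Let $(\mathcal Q,d)$ be a Hadamard space, let $Y$ be a $\mathcal Q$-valued random variable, let $o\in\mathcal Q$, and let $\tau\in\mathcal S_0^+$. Assume $\mathbb E[\tau'(d(Y,o))]<\infty$. Let $m\in\arg\min_{q\in\mathcal Q}\mathbb E[\tau(d(Y,q))-\tau(d(Y,o))]$ and let $q\in\mathcal Q\setminus\{m\}$. Then $$\mathbb E\big[\tau(d(Y,q))-\tau(d(Y,m))\big]\ \ge\ \tfrac12\, d(q,m)^2\,\mathbb E\Big[\tau'^{\oplus}\big(\max(d(Y,m),d(Y,q))\big)\Big].$$
   Context: $\mathcal S$ denotes the set of nondecreasing convex functions $\tau:[0,\infty)\to\mathbb R$ that are differentiable on $(0,\infty)$ with concave derivative $\tau'$; one sets $\tau'(0):=\lim_{x\searrow0}\tau'(x)$. $\mathcal S_0^+$ is the set of $\tau\in\mathcal S$ with $\tau(0)=0$ and $\tau'(x)>0$ for all $x>0$. For a real function $g$, $g^{\oplus}$ and $g^{\ominus}$ denote its right and left derivatives; $\tau'^{\oplus}$ is the right derivative of $\tau'$ (it exists on $(0,\infty)$, is nonnegative and nonincreasing). A metric space $(\mathcal Q,d)$ is a Hadamard space if it is complete and for all $y_0,y_1\in\mathcal Q$ there exists $m\in\mathcal Q$ with $\frac12 d(y_0,q)^2+\frac12 d(y_1,q)^2-\frac14 d(y_0,y_1)^2\ge d(q,m)^2$ for all $q\in\mathcal Q$ (equivalently, a complete CAT(0) space). $\mathcal Q$ carries its Borel $\sigma$-algebra and $Y$ is a measurable map from a probability space into $\mathcal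 Q$. *)

(* Defs.v *)
From HB Require Import structures.
From mathcomp Require Import all_boot all_order all_algebra.
From mathcomp Require Import all_classical all_reals all_analysis.
Set Implicit Arguments. Unset Strict Implicit. Unset Printing Implicit Defensive.
Import Order.TTheory GRing.Theory Num.Theory.
Import numFieldNormedType.Exports.
Local Open Scope classical_set_scope.
Local Open Scope ring_scope.

Section Defs.
Variable R : realType.

Definition is_metric (Q : Type) (d : Q -> Q -> R) : Prop :=
  (forall x y, 0 <= d x y) /\
  (forall x y, d x y = 0 <-> x = y) /\
  (forall x y, d x y = d y x) /\
  (forall x y z, d x z <= d x y + d y z).

Definition d_cauchy (Q : Type) (d : Q -> Q -> R) (u : nat -> Q) : Prop :=
  forall e : R, 0 < e -> exists N : nat, forall n k : nat,
    (N <= n)%N -> (N <= k)%N -> d (u n) (u k) < e.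

Definition d_converges (Q : Type) (d : Q -> Q -> R) (u : nat -> Q) (l : Q) : Prop :=
  forall e : R, 0 < e -> exists N : nat, forall n : nat, (N <= n)%N -> d (u n) l < e.

Definition d_complete (Q : Type) (d : Q -> Q -> R) : Prop :=
  forall u : nat -> Q, d_cauchy d u -> exists l, d_converges d u l.

Definition hadamard (Q : Type) (d : Q -> Q -> R) : Prop :=
  is_metric d /\ d_complete d /\
  forall y0 y1 : Q, exists m : Q, forall q : Q,
    2^-1 * d y0 q ^+ 2 + 2^-1 * d y1 q ^+ 2 - 4^-1 * d y0 y1 ^+ 2 >= d q m ^+ 2.

Definition d_open (Q : Type) (d : Q -> Q -> R) (A : set Q) : Prop :=
  forall x, A x -> exists2 e : R, 0 < e & (fun y => d x y < e) `<=` A.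

Definition d_borel (Q : Type) (d : Q -> Q -> R) : set (set Q) :=
  <<s d_open d >>.

Definition nonneg_reals : set R := [set x | 0 <= x].
Definition pos_reals : set R := [set x | 0 < x].

Definition tau_deriv (tau : R -> R) (x : R) : R :=
  if 0 < x then derive1 tau x else lim (derive1 tau y @[y --> 0^'+]).

Definition rderiv (g : R -> R) (x : R) : R :=
  lim ((g (x + h) - g x) / h @[h --> 0^'+]).

Definition in_S (tau : R -> R) : Prop :=
  (forall x y, 0 <= x -> x <= y -> tau x <= tau y) /\
  (forall x y t, 0 <= x -> 0 <= y -> 0 <= t <= 1 ->
     tau (t * x + (1 - t) * y) <= t * tau x + (1 - t) * tau y) /\
  (forall x, 0 < x -> derivable tau x 1) /\
  (forall x y t, 0 < x -> 0 < y -> 0 <= t <= 1 ->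
     t * derive1 tau x + (1 - t) * derive1 tau y <= derive1 tau (t * x + (1 - t) * y)).

Definition in_S0plus (tau : R -> R) : Prop :=
  in_S tau /\ tau 0 = 0 /\ (forall x, 0 < x -> 0 < tau_deriv tau x).

End Defs.

(* Main.v *)
Require Import Defs.
From HB Require Import structures.
From mathcomp Require Import all_boot all_order all_algebra.
From mathcomp Require Import all_classical all_reals all_analysis.
From mathcomp Require Import ring lra.
From mathcomp Require Import measurable_realfun.
Import Order.TTheory GRing.Theory Num.Theory.
Import numFieldNormedType.Exports.
Local Open Scope classical_set_scope.
Local Open Scope ring_scope.

Section PartA.
Set Implicit Arguments. Unset Strict Implicit.
Variable R : realType.
Variable tau : R -> R.
Hypothesis Ht : in_S0plus tau.

Let f' := derive1 tau.

Lemma chordC (x y z : R) : 0 < x -> x < y -> y < z ->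
  (z - y) * f' x + (y - x) * f' z <= (z - x) * f' y.
Proof.
move=> x0 xy yz.
have [[_ [_ [_ Hc]]] _] := Ht.
set t := (z - y) / (z - x).
have zx : 0 < z - x by lra.
have t01 : 0 <= t <= 1.
  apply/andP; split; first by rewrite /t divr_ge0 //; lra.
  by rewrite /t ler_pdivrMr // mul1r; lra.
have H := Hc x z t x0 (lt_trans x0 (lt_trans xy yz)) t01.
have ty : t * x + (1 - t) * z = y.
  rewrite /t; field; lra.
rewrite ty in H.
have e1 : t * (z - x) = z - y by rewrite /t divfK //; lra.
have e2 : y - x = (1 - t) * (z - x) by rewrite mulrBl mul1r e1; lra.
rewrite -e1 e2.
have -> : t * (z - x) * f' x + (1 - t) * (z - x) * f' z =
   (z - x) * (t * f' x + (1 - t) * f' z) by ring.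
by rewrite ler_wpM2l //; lra.
Qed.


Lemma fpos x : 0 < x -> 0 < f' x.
Proof.
move=> x0; have [_ [_ H]] := Ht; have := H x x0.
by rewrite /tau_deriv x0.
Qed.

Lemma tdE x : 0 < x -> tau_deriv tau x = f' x.
Proof. by move=> x0; rewrite /tau_deriv x0. Qed.

Lemma fmono x y : 0 < x -> x <= y -> f' x <= f' y.
Proof.
move=> x0; rewrite le_eqVlt => /predU1P[<-//|xy].
rewrite leNgt; apply/negP => yx.
set del := f' x - f' y.
have d0 : 0 < del by rewrite /del; lra.
have fy0 := fpos (lt_trans x0 xy).
set z := y + ((y - x) * f' y / del + 1).
have w0 : 0 <= (y - x) * f' y / del by rewrite divr_ge0 // ?mulr_ge0 //; lra.
have yz : y < z by rewrite /z; lra.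
have C := chordC x0 xy yz.
have fz0 := fpos (lt_trans (lt_trans x0 xy) yz).
have e : (z - y) * del = (y - x) * f' y + del.
  rewrite /z; field; lra.
have : (z - y) * del <= (y - x) * f' y.
  have : 0 <= (y - x) * f' z by rewrite mulr_ge0 //; lra.
  have e3 : (z - x) * f' y = (z - y) * f' y + (y - x) * f' y by ring.
  have e4 : (z - y) * del = (z - y) * f' x - (z - y) * f' y by rewrite /del; ring.
  lra.
lra.
Qed.

Lemma fbound x y : 0 < x -> x <= y -> x * f' y <= 2 * y * f' x.
Proof.
move=> x0; rewrite le_eqVlt => /predU1P[<-|xy].
  have := fpos x0; nra.
have x20 : 0 < x / 2 by lra.
have C := chordC x20 (ltac:(lra) : x / 2 < x) xy.
have := fpos x20; have := fpos x0; have := fpos (lt_trans x0 xy).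
nra.
Qed.

Definition sl (a b : R) := (f' b - f' a) / (b - a).

Lemma sl1 a b c : 0 < a -> a < b -> b < c -> sl a c <= sl a b.
Proof.
move=> a0 ab bc; have C := chordC a0 ab bc.
rewrite /sl ler_pdivrMr; last lra.
rewrite mulrAC ler_pdivlMr; last lra.
nra.
Qed.

Lemma sl2 a b c : 0 < a -> a < b -> b < c -> sl b c <= sl a c.
Proof.
move=> a0 ab bc; have C := chordC a0 ab bc.
rewrite /sl ler_pdivrMr; last lra.
rewrite mulrAC ler_pdivlMr; last lra.
nra.
Qed.

Lemma sl_mono a b c d : 0 < a -> a < b -> c < d -> a <= c -> b <= d ->
  sl c d <= sl a b.
Proof.
move=> a0 ab cd ac bd.
have H1 : sl a d <= sl a b.
  move: bd; rewrite le_eqVlt => /predU1P[->//|bd]; exact: sl1.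
apply: le_trans H1.
move: ac; rewrite le_eqVlt => /predU1P[->//|ac]; exact: sl2 a0 ac cd.
Qed.

Definition hh x := rderiv (tau_deriv tau) x.

Lemma hh_props x : 0 < x ->
  (forall s, 0 < s -> (f' (x + s) - f' x) / s <= hh x) /\
  (forall p p', 0 < p -> p < p' -> p' <= x -> hh x <= sl p p').
Proof.
move=> x0.
set Qf := fun s => (tau_deriv tau (x + s) - tau_deriv tau x) / s.
have QfE s : 0 < s -> Qf s = sl x (x + s).
  move=> s0; rewrite /Qf /sl !tdE //; last lra.
  by congr (_ / _); ring.
set S := Qf @` [set` Interval (BRight (0:R)) (BInfty _ false)].
have ubS : forall p p', 0 < p -> p < p' -> p' <= x -> ubound S (sl p p').
  move=> p p' p0 pp' p'x _ [s /= s0 <-]; move: s0; rewrite in_itv /= andbT => s0.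
  rewrite QfE //; apply: sl_mono => //; lra.
have cv : Qf s @[s --> 0^'+] --> sup S.
  apply: nonincreasing_at_right_cvgr => //.
    move=> s1 s2; rewrite !in_itv /= !andbT => s10 s20 s12.
    rewrite !QfE //; apply: sl_mono => //; lra.
  exists (sl (x/2) x); apply: ubS => //; lra.
have hE : hh x = sup S by rewrite /hh /rderiv; apply: cvg_lim.
have hasub : has_ubound S by exists (sl (x/2) x); apply: ubS => //; lra.
split.
  move=> s s0; rewrite hE; apply: ub_le_sup => //.
  exists s; first by rewrite /= in_itv /= andbT.
  rewrite QfE // /sl; congr (_ / _); ring.
move=> p p' p0 pp' p'x; rewrite hE; apply: ge_sup; last exact: ubS.
by exists (Qf 1), 1 => //=; rewrite in_itv /= andbT.
Qed.

Lemma hh_ge0 x : 0 < x -> 0 <= hh x.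
Proof.
move=> x0; have [H _] := hh_props x0.
apply: le_trans (H 1 ltr01).
rewrite divr_ge0 // subr_ge0; apply: fmono => //; lra.
Qed.

Lemma hh_noninc x y : 0 < x -> x <= y -> hh y <= hh x.
Proof.
move=> x0; rewrite le_eqVlt => /predU1P[->//|xy].
have y0 : 0 < y by lra.
have [_ H2] := hh_props y0; have [H1 _] := hh_props x0.
apply: le_trans (H2 x y x0 xy (lexx _)) _.
have := H1 (y - x) (ltac:(lra)).
rewrite /sl; have -> : x + (y - x) = y by ring. done.
Qed.

Lemma hh_le_sl x p p' : 0 < p -> p < p' -> p' <= x -> hh x <= sl p p'.
Proof. move=> p0 pp' p'x; have [_ H] := hh_props (lt_le_trans (lt_trans p0 pp') p'x); exact: H. Qed.

Lemma td_props :
  tau_deriv tau 0 = inf (f' @` [set` Interval (BRight (0:R)) (BInfty _ false)]).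
Proof.
rewrite /tau_deriv ltxx; apply: cvg_lim => //.
apply: nondecreasing_at_right_cvgr => //.
  by move=> a b; rewrite !in_itv /= !andbT => a0 b0 ab; apply: fmono.
by exists 0 => _ [y /= + <-]; rewrite in_itv /= andbT => y0; apply/ltW/fpos.
Qed.

Lemma td0_le x : 0 < x -> tau_deriv tau 0 <= f' x.
Proof.
move=> x0; rewrite td_props; apply: ge_inf.
  by exists 0 => _ [y /= + <-]; rewrite in_itv /= andbT => y0; apply/ltW/fpos.
by exists x => //=; rewrite in_itv /= andbT.
Qed.

Lemma td0_ge0 : 0 <= tau_deriv tau 0.
Proof.
rewrite td_props; apply: lb_le_inf.
  by exists (f' 1), 1 => //=; rewrite in_itv /= andbT.
by move=> _ [y /= + <-]; rewrite in_itv /= andbT => y0; apply/ltW/fpos.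
Qed.

Lemma td_ge0 x : 0 <= x -> 0 <= tau_deriv tau x.
Proof.
rewrite le_eqVlt => /predU1P[<-|x0]; first exact: td0_ge0.
by rewrite tdE //; apply/ltW/fpos.
Qed.

Lemma td_mono x y : 0 <= x -> x <= y -> tau_deriv tau x <= tau_deriv tau y.
Proof.
rewrite le_eqVlt => /predU1P[<-|x0] xy.
  move: xy; rewrite le_eqVlt => /predU1P[<-//|y0].
  by rewrite (tdE y0); apply: td0_le.
by rewrite !tdE //; [apply: fmono | apply: lt_le_trans xy].
Qed.

Lemma tau_mono x y : 0 <= x -> x <= y -> tau x <= tau y.
Proof. by have [[H _] _] := Ht; apply: H. Qed.

Lemma tau_rcont0 : tau x @[x --> 0^'+] --> tau 0.
Proof.
have [[_ [Hc _]] _] := Ht.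
set K := tau 1 - tau 0.
have K0 : 0 <= K by rewrite /K subr_ge0; apply: tau_mono => //.
apply/cvgrPdist_le => e e0.
set del := Num.min 1 (e / (K + 1)).
have eK : 0 < e / (K + 1) by rewrite divr_gt0 //; lra.
have d0 : 0 < del by rewrite /del lt_min ltr01 eK.
near=> x.
have x0 : 0 < x by near: x; apply: nbhs_right_gt.
have xd : x <= del by near: x; apply: nbhs_right_le.
have x1 : x <= 1 by apply: le_trans xd _; rewrite /del ge_min lexx.
have x2 : x <= e / (K + 1) by apply: le_trans xd _; rewrite /del ge_min lexx orbT.
have H := Hc 1 0 x ler01 (lexx 0) (ltac:(apply/andP; split; lra)).
rewrite mulr0 addr0 mulr1 in H.
have m := tau_mono (lexx 0) (ltW x0).
have x3 : x * (K + 1) <= e by rewrite -ler_pdivlMr //; lra.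
rewrite distrC ger0_norm; last lra.
have : tau x - tau 0 <= x * K by rewrite /K; lra.
nra.
Unshelve. all: by end_near.
Qed.

Lemma tau_derivable x : 0 < x -> derivable tau x 1.
Proof. by have [[_ [_ [H _]]] _] := Ht; apply: H. Qed.

Lemma tau_cont_at x : 0 < x -> {for x, continuous tau}.
Proof. by move=> x0; apply/differentiable_continuous/derivable1_diffP/tau_derivable. Qed.

Lemma tau_cont_itv u v : 0 <= u -> u < v -> {within `[u, v], continuous tau}.
Proof.
move=> u0 uv; apply/continuous_within_itvP => //; split.
- move=> x; rewrite in_itv /= => /andP[ux xv]; apply: tau_cont_at; lra.
- move: u0 uv; rewrite le_eqVlt => /predU1P[<-|u0] uv; first exact: tau_rcont0.
  by apply: cvg_at_right_filter; apply: tau_cont_at.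
- by apply: cvg_at_left_filter; apply: tau_cont_at; lra.
Qed.

Lemma phi_mvt k u v : 0 <= u -> u < v -> exists2 c, c \in `]u, v[ &
  (tau v - k * (v * v)) - (tau u - k * (u * u)) = (f' c - k * (c + c)) * (v - u).
Proof.
move=> u0 uv.
apply: (@MVT R (fun x => tau x - k * (x * x)) (fun c => f' c - k * (c + c)) u v uv).
  move=> x; rewrite in_itv /= => /andP[ux xv].
  have x0 : 0 < x by lra.
  have dt : is_derive x 1 tau (f' x).
    by rewrite /f' derive1E; apply: derivableP; apply: tau_derivable.
  have := is_deriveB dt (is_deriveZ k (is_deriveM (is_derive_id x 1) (is_derive_id x 1))).
  suff -> : f' x - k * (x + x) = f' x - k *: (x%:A + x%:A) by [].
  by rewrite /GRing.scale /= !mulr1.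
have ct := tau_cont_itv u0 uv.
have cq : {within `[u, v], continuous (fun y : R => k * (y * y))}.
  apply: continuous_subspaceT => y.
  apply: cvgM; first exact: cvg_cst.
  by apply: cvgM; apply: cvg_id.
move=> x; have := continuousB (ct x) (cq x).
done.
Qed.

Section PhiM.
Variable M : R.
Hypothesis M0 : 0 < M.
Let h := hh M.
Let phi x := tau x - (h / 2) * (x * x).

Lemma gB1 x y : 0 < x -> x < y -> y <= M -> f' x - h * x <= f' y - h * y.
Proof.
move=> x0 xy yM; have := hh_le_sl x0 xy yM; rewrite -/h /sl.
by rewrite ler_pdivlMr; lra.
Qed.

Lemma gB2 x : 0 < x -> x <= M -> h * x <= f' x.
Proof.
move=> x0 xM; have fx := fpos x0.
have [h0|h0] := leP h 0; first nra.
apply/ler_addgt0Pr => e e0.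
set eps := Num.min (x / 2) (e / h).
have eh : 0 < e / h by rewrite divr_gt0.
have ep0 : 0 < eps by rewrite /eps lt_min eh andbT; lra.
have ex1 : eps <= x / 2 by rewrite /eps ge_min lexx.
have ex2 : eps <= e / h by rewrite /eps ge_min lexx orbT.
have epx : eps < x by lra.
have epe : h * eps <= e.
  by rewrite mulrC -ler_pdivlMr.

have := gB1 ep0 epx xM; have := fpos ep0; nra.
Qed.

Lemma phi_diff u v : 0 <= u -> u < v -> v <= M ->
  exists2 c, u < c < v & phi v - phi u = (f' c - h * c) * (v - u).
Proof.
move=> u0 uv vM; have [c] := phi_mvt (h / 2) u0 uv.
rewrite in_itv /= => cuv E; exists c => //.
by rewrite /phi E; congr (_ * _); field.
Qed.

Lemma phi_mono u v : 0 <= u -> u <= v -> v <= M -> phi u <= phi v.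
Proof.
move=> u0; rewrite le_eqVlt => /predU1P[->//|uv] vM.
have [c /andP[uc cv] E] := phi_diff u0 uv vM.
have c0 : 0 < c by lra.
have := gB2 c0 (ltW (lt_le_trans cv vM)).
rewrite -subr_ge0 -(subr_ge0 (phi u)) E => H.
by apply: mulr_ge0 => //; lra.
Qed.

Lemma phi_conv u v s : 0 <= u -> u < v -> v <= M -> 0 < s < 1 ->
  phi ((1 - s) * u + s * v) <= (1 - s) * phi u + s * phi v.
Proof.
move=> u0 uv vM /andP[s0 s1].
set w := (1 - s) * u + s * v.
have uw : u < w by rewrite /w; nra.
have wv : w < v by rewrite /w; nra.
have [c1 /andP[uc1 c1w] E1] := phi_diff u0 uw (ltW (lt_le_trans wv vM)).
have [c2 /andP[wc2 c2v] E2] := phi_diff (ltW (le_lt_trans u0 uw)) wv vM.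
have c10 : 0 < c1 by lra.
have G := gB1 c10 (lt_trans c1w wc2) (ltW (lt_le_trans c2v vM)).
have ew1 : w - u = s * (v - u) by rewrite /w; ring.
have ew2 : v - w = (1 - s) * (v - u) by rewrite /w; ring.
rewrite ew1 in E1; rewrite ew2 in E2.
have P : 0 <= s * (1 - s) * (v - u) by apply: mulr_ge0; [apply: mulr_ge0|]; lra.
have : (1 - s) * (phi w - phi u) <= s * (phi v - phi w).
  rewrite E1 E2.
  have -> : (1 - s) * ((f' c1 - h * c1) * (s * (v - u))) =
     (s * (1 - s) * (v - u)) * (f' c1 - h * c1) by ring.
  have -> : s * ((f' c2 - h * c2) * ((1 - s) * (v - u))) =
     (s * (1 - s) * (v - u)) * (f' c2 - h * c2) by ring.
  by apply: ler_wpM2l.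
lra.
Qed.

End PhiM.

Lemma key a b c D t : 0 <= a -> 0 <= b -> 0 <= c -> 0 < D ->
  a <= b + D -> b <= a + D -> D <= a + b -> 0 < t < 1 ->
  c ^+ 2 <= (1 - t) * a ^+ 2 + t * b ^+ 2 - t * (1 - t) * D ^+ 2 ->
  tau c - tau a <= t * (tau b - tau a) - t * (1 - t) * (D ^+ 2 / 2) * hh (Num.max a b).
Proof.
move=> a0 b0 c0 D0 abD baD Dab /andP[t0 t1] cle.
set M := Num.max a b.
have aM : a <= M by rewrite /M le_max lexx.
have bM : b <= M by rewrite /M le_max lexx orbT.
have M0 : 0 < M by lra.
have h0 := hh_ge0 M0.
set h := hh M in h0 *.
set x := (1 - t) * a + t * b.
have x0 : 0 <= x by rewrite /x; apply: addr_ge0; apply: mulr_ge0; lra.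
have xM : x <= M.
  have : (1 - t) * a <= (1 - t) * M by apply: ler_wpM2l; lra.
  have : t * b <= t * M by apply: ler_wpM2l; lra.
  rewrite /x; lra.
have ab2 : (a - b) ^+ 2 <= D ^+ 2.
  have := mulr_ge0 (ltac:(lra) : 0 <= b + D - a) (ltac:(lra) : 0 <= a + D - b).
  have -> : (b + D - a) * (a + D - b) = D ^+ 2 - (a - b) ^+ 2 by ring.
  lra.
have cx2 : c ^+ 2 <= x ^+ 2.
  apply: le_trans cle _.
  have -> : x ^+ 2 = (1 - t) * a ^+ 2 + t * b ^+ 2 - t * (1 - t) * (a - b) ^+ 2 by rewrite /x; ring.
  have : t * (1 - t) * (a - b) ^+ 2 <= t * (1 - t) * D ^+ 2.
    by apply: ler_wpM2l => //; nra.
  lra.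
have cx : c <= x by rewrite -ler_sqr ?nnegrE.
have Pm := phi_mono (M:=M) c0 cx xM.
have Pc : tau x - (h / 2) * (x * x) <=
  (1 - t) * (tau a - (h / 2) * (a * a)) + t * (tau b - (h / 2) * (b * b)).
  case: (ltgtP a b) => [ab|ba|eab].
  - have := phi_conv (M:=M) a0 ab bM (ltac:(apply/andP; split; lra) : 0 < t < 1).
    by rewrite /= -/x.
  - have := phi_conv (M:=M) b0 ba aM (ltac:(apply/andP; split; lra) : 0 < 1 - t < 1).
    have -> : (1 - (1 - t)) * b + (1 - t) * a = x by rewrite /x; ring.
    rewrite /= -/h => H; apply: (le_trans H).
    have -> : (1 - (1 - t)) = t by ring.
    by rewrite addrC.
  - rewrite /x -eab.
    have -> : (1 - t) * a + t * a = a by ring.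
    have -> : forall z : R, (1 - t) * z + t * z = z by move=> z; ring.
    by [].
have K : (h / 2) * (t * (1 - t) * D ^+ 2) <=
         (h / 2) * ((1 - t) * a ^+ 2 + t * b ^+ 2 - c ^+ 2).
  by apply: ler_wpM2l; lra.
have E1 : (1 - t) * (tau a - h / 2 * (a * a)) + t * (tau b - h / 2 * (b * b)) =
   (1 - t) * tau a + t * tau b - (h / 2) * ((1 - t) * a ^+ 2 + t * b ^+ 2) by rewrite !expr2; ring.
have E2 : (h / 2) * ((1 - t) * a ^+ 2 + t * b ^+ 2 - c ^+ 2) =
   (h / 2) * ((1 - t) * a ^+ 2 + t * b ^+ 2) - h / 2 * (c * c) by rewrite !expr2; ring.
have -> : t * (1 - t) * (D ^+ 2 / 2) * h = (h / 2) * (t * (1 - t) * D ^+ 2) by ring.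
have E3 : t * (tau b - tau a) = (1 - t) * tau a + t * tau b - tau a by ring.
rewrite E1 in Pc; rewrite E2 in K; rewrite E3.
move: Pm Pc K.
move: (h / 2 * (c * c)) (h / 2 * (x * x)) (h / 2 * ((1 - t) * a ^+ 2 + t * b ^+ 2))
  (h / 2 * (t * (1 - t) * D ^+ 2)) (tau x) ((1 - t) * tau a + t * tau b) => Z X Y W T S.
lra.
Qed.

Lemma mvt0 u v : 0 <= u -> u < v -> exists2 c, u < c < v &
  tau v - tau u = f' c * (v - u).
Proof.
move=> u0 uv; have [c] := phi_mvt 0 u0 uv; rewrite in_itv /= => cuv E.
by exists c => //; move: E; rewrite !mul0r !subr0.
Qed.

Lemma lipb u v r : 0 <= u -> 0 <= v -> `|v - u| <= r ->
  `|tau v - tau u| <= r * (4 * tau_deriv tau u + f' (2 * r)).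
Proof.
move=> u0 v0 uvr.
have r0 : 0 <= r by apply: le_trans uvr.
have tdu := td_ge0 u0.
have Bpos : 0 < r -> 0 <= 4 * tau_deriv tau u + f' (2 * r).
  by move=> rp; have := fpos (ltac:(lra) : 0 < 2 * r); lra.
case: (ltgtP u v) => [uv|vu|euv]; last first.
- rewrite -euv subrr normr0; move: r0; rewrite le_eqVlt => /predU1P[<-|rp].
    by rewrite mul0r.
  by apply: mulr_ge0; [apply/ltW | apply: Bpos].
- have rp : 0 < r by apply: lt_le_trans uvr; rewrite normr_gt0 subr_eq0 lt_eqF.
  have [c /andP[vc cu] E] := mvt0 v0 vu.
  rewrite distrC E normrM ger0_norm; last by apply/ltW/fpos; lra.
  have fcu : f' c <= f' u by apply: fmono; lra.
  have ur : u - v <= r by move: uvr; rewrite distrC ger0_norm; lra.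
  rewrite ger0_norm; last lra.
  rewrite tdE; last lra.
  have := fpos (ltac:(lra) : 0 < 2 * r); have := fpos (ltac:(lra) : 0 < c).
  nra.
- have rp : 0 < r by apply: lt_le_trans uvr; rewrite normr_gt0 subr_eq0 gt_eqF.
  have [c /andP[uc cv] E] := mvt0 u0 uv.
  have c0 : 0 < c by lra.
  rewrite E normrM ger0_norm; last by apply/ltW/fpos.
  have vr : v - u <= r by move: uvr; rewrite ger0_norm; lra.
  rewrite ger0_norm; last lra.
  have fcb : f' c <= f' (u + r) by apply: fmono; lra.
  have B : f' (u + r) <= 4 * tau_deriv tau u + f' (2 * r).
    have [ru|ur] := leP r u.
    + have u0' : 0 < u by lra.
      have := fbound u0' (ltac:(lra) : u <= u + r).
      rewrite tdE //; have := fpos (ltac:(lra) : 0 < 2 * r); have := fpos u0'.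
      nra.
    + have := fmono (ltac:(lra) : 0 < u + r) (ltac:(lra) : u + r <= 2 * r).
      lra.
  have := fpos c0.
  nra.
Qed.

End PartA.


Section Geo.
Set Implicit Arguments. Unset Strict Implicit.
Variables (R : realType) (Q : Type) (d : Q -> Q -> R).
Hypothesis Hh : hadamard d.

Lemma geo (m q : Q) (k : nat) : exists c : Q, forall y : Q,
  d y c ^+ 2 <= (1 - (2^-1) ^+ k) * d y m ^+ 2 + (2^-1) ^+ k * d y q ^+ 2
     - (2^-1) ^+ k * (1 - (2^-1) ^+ k) * d q m ^+ 2.
Proof.
have [[d0 [deq [dsym dtri]]] [_ Hmid]] := Hh.
elim: k => [|k [c Hc]].
  by exists q => y; rewrite expr0 subrr mul0r mul1r add0r mulr0 mul0r subr0.
set t : R := (2^-1) ^+ k.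
have t0 : 0 < t by rewrite /t exprn_gt0 // invr_gt0.
have t1 : t <= 1 by rewrite /t exprn_ile1 // ?invr_ge0 ?invf_le1 //; lra.
set D := d q m.
have D0 : 0 <= D := d0 _ _.
have Hq := Hc q.
have : d q q = 0 by apply/deq.
move=> qq; rewrite qq expr0n /= mulr0 addr0 -/D in Hq.
have dqc : d q c <= (1 - t) * D.
  rewrite -ler_sqr ?nnegrE //; last by apply: mulr_ge0 => //; lra.
  rewrite -/t in Hq; have -> : ((1 - t) * D) ^+ 2 = (1 - t) * D ^+ 2 - t * (1 - t) * D ^+ 2 by ring.
  exact: Hq.
have dmc : t * D <= d m c.
  have := dtri q c m; rewrite -/D (dsym c m); lra.
have dmc2 : (t * D) ^+ 2 <= d m c ^+ 2.
  by rewrite ler_sqr ?nnegrE //; apply: mulr_ge0 => //; lra.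
have [c' Hc'] := Hmid m c.
exists c' => y.
have H1 := Hc' y; have H2 := Hc y.
rewrite (dsym m y) in H1.
have -> : (2^-1 : R) ^+ k.+1 = 2^-1 * t by rewrite exprS.
set a := d y m in H1 H2 *; set b := d y q in H2 *.
rewrite -/D -/t in H2.
have e : 2^-1 * a ^+ 2 + 2^-1 * ((1 - t) * a ^+ 2 + t * b ^+ 2 - t * (1 - t) * D ^+ 2)
     - 4^-1 * (t * D) ^+ 2 =
   (1 - 2^-1 * t) * a ^+ 2 + 2^-1 * t * b ^+ 2 - 2^-1 * t * (1 - 2^-1 * t) * D ^+ 2.
  by field.
rewrite -e.
have : 4^-1 * (t * D) ^+ 2 <= 4^-1 * d m c ^+ 2 by apply: ler_wpM2l => //; lra.
have : 2^-1 * d c y ^+ 2 <= 2^-1 * ((1 - t) * a ^+ 2 + t * b ^+ 2 - t * (1 - t) * D ^+ 2).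
  by apply: ler_wpM2l => //; rewrite (dsym c y); lra.
lra.
Qed.

End Geo.

Section Meas.
Set Implicit Arguments. Unset Strict Implicit.
Variables (R : realType) (Q : Type) (d : Q -> Q -> R)
  (dO : measure_display) (Omega : measurableType dO).
Variable (Y : Omega -> Q).
Hypothesis Hmet : is_metric d.
Hypothesis HY : forall B, d_borel d B -> measurable (Y @^-1` B).

Lemma meas_u (q' : Q) : measurable_fun setT (fun w => d (Y w) q').
Proof.
have [d0 [deq [dsym dtri]]] := Hmet.
apply: (measurability (@RGenOInfty.G R)) => [|/= _ [_] [x] -> <-].
  exact: RGenOInfty.measurableE.
rewrite setTI.
have -> : (fun w => d (Y w) q') @^-1` `]x, +oo[ = Y @^-1` [set y | x < d y q'].
  by apply/seteqP; split => w /=; rewrite in_itv /= andbT.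
apply: HY; apply: sub_sigma_algebra => y /= xy.
exists (d y q' - x); first by rewrite subr_gt0.
move=> z /= yz.
have := dtri y z q'; rewrite (dsym y z) in yz *; lra.
Qed.

End Meas.

Lemma lim_half (R : realType) (K X : R) : 0 <= K ->
  (forall k : nat, (1 - (2^-1) ^+ k.+1) * K <= X) -> K <= X.
Proof.
move=> K0 H; apply/ler_addgt0Pr => e e0.
have Ke : 0 <= K / e by rewrite divr_ge0 // ltW.
have := archi_boundP Ke; set n := Num.bound (K / e) => Hn.
have h2 : (n%:R : R) < 2 ^+ n.
  by rewrite -natrX ltr_nat ltn_expl.
have t0 : (0 : R) < 2 ^+ n by rewrite exprn_gt0.
have Hk := H n.
have ht : (2^-1 : R) ^+ n.+1 <= (2 ^+ n)^-1.
  rewrite exprS exprVn; have : (0:R) <= (2 ^+ n)^-1 by rewrite invr_ge0 ltW.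
  lra.
have : K / e < 2 ^+ n by lra.
rewrite ltr_pdivrMr // => Kl.
have : (2 ^+ n)^-1 * K <= e.
  by rewrite ler_pdivrMl //; lra.
have : (2^-1 : R) ^+ n.+1 * K <= (2 ^+ n)^-1 * K by apply: ler_wpM2r.
move: Hk; rewrite (_ : (1 - (2^-1) ^+ n.+1) * K = K - (2^-1) ^+ n.+1 * K); last by ring.
lra.
Qed.

Section IntHelp.
Set Implicit Arguments. Unset Strict Implicit.
Variables (R : realType) (dO : measure_display) (Omega : measurableType dO)
  (P : probability Omega R).

Lemma intB (f g : Omega -> R) : P.-integrable setT (EFin \o f) ->
  P.-integrable setT (EFin \o g) -> P.-integrable setT (EFin \o (fun w => f w - g w)).
Proof.
move=> hf hg; apply: (eq_integrable measurableT); last exact: (integrableB measurableT hf hg).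
move=> w _.
by rewrite /= EFinB.
Qed.

Lemma intZ (k : R) (f : Omega -> R) : P.-integrable setT (EFin \o f) ->
  P.-integrable setT (EFin \o (fun w => k * f w)).
Proof.
move=> hf; apply: (eq_integrable measurableT); last exact: (integrableZl measurableT k hf).
move=> w _.
by rewrite /= EFinM.
Qed.

Lemma intD (f g : Omega -> R) : P.-integrable setT (EFin \o f) ->
  P.-integrable setT (EFin \o g) -> P.-integrable setT (EFin \o (fun w => f w + g w)).
Proof.
move=> hf hg; apply: (eq_integrable measurableT); last exact: (integrableD measurableT hf hg).
move=> w _.
by rewrite /= EFinD.
Qed.

Lemma intC (k : R) : P.-integrable setT (EFin \o (fun _ : Omega => k)).
Proof. exact: finite_measure_integrable_cst. Qed.

Lemma intE (f : Omega -> R) : P.-integrable setT (EFin \o f) ->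
  (\int[P]_w (f w)%:E = (Rintegral P setT f)%:E)%E.
Proof. by move=> hf; rewrite /Rintegral fineK //; exact: integrable_fin_num. Qed.

End IntHelp.

Theorem mainTheorem1 (R : realType) (Q : Type) (d : Q -> Q -> R)
  (dO : measure_display) (Omega : measurableType dO) (P : probability Omega R)
  (Y : Omega -> Q) (o m q : Q) (tau : R -> R) :
  hadamard d ->
  (forall B, d_borel d B -> measurable (Y @^-1` B)) ->
  in_S0plus tau ->
  (\int[P]_w (tau_deriv tau (d (Y w) o))%:E < +oo)%E ->
  (forall q' : Q,
     (\int[P]_w (tau (d (Y w) m) - tau (d (Y w) o))%:E
      <= \int[P]_w (tau (d (Y w) q') - tau (d (Y w) o))%:E)%E) ->
  q <> m ->
  (((2^-1 * d q m ^+ 2)%:E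
      * \int[P]_w (rderiv (tau_deriv tau) (Num.max (d (Y w) m) (d (Y w) q)))%:E)
   <= \int[P]_w (tau (d (Y w) q) - tau (d (Y w) m))%:E)%E.
Proof.
move=> Hh HY Htau Hint Hmin Hqm.
have Hmet := Hh.1.
have [d0 [deq [dsym dtri]]] := Hmet.
set D := d q m.
have D0 : 0 < D.
  rewrite lt_neqAle d0 andbT; apply/eqP => /esym /deq; exact: Hqm.
pose u q' w := d (Y w) q'.
have mu q' : measurable_fun setT (u q') := meas_u Hmet HY q'.
have u0 q' w : 0 <= u q' w by exact: d0.
pose tt x := tau (Num.max x 0).
have mtt : measurable_fun setT tt.
  apply: nondecreasing_measurable => // x y xy.
  by apply: (tau_mono Htau); [rewrite le_max lexx orbT | apply: le_max2].
pose F q' w := tau (u q' w) - tau (u o w).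
have mF q' : measurable_fun setT (F q').
  have -> : F q' = (fun w => tt (u q' w) - tt (u o w)).
    by apply/funext => w; rewrite /tt /F !max_l.
  by apply: measurable_funB; apply: measurableT_comp.
pose tdt x := tau_deriv tau (Num.max x 0).
have mtdt : measurable_fun setT tdt.
  apply: nondecreasing_measurable => // x y xy.
  by apply: (td_mono Htau); [rewrite le_max lexx orbT | apply: le_max2].
have ig0 : P.-integrable setT (EFin \o (fun w => tau_deriv tau (u o w))).
  apply/integrableP; split.
    apply/measurable_EFinP.
    have -> : (fun w => tau_deriv tau (u o w)) = tdt \o u o.
      by apply/funext => w; rewrite /tdt /= max_l.
    exact: measurableT_comp.
  apply: le_lt_trans Hint; rewrite le_eqVlt; apply/orP; left; apply/eqP.
  apply: eq_integral => w _ /=; rewrite ger0_norm //.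
  exact: (td_ge0 Htau).
have iF q' : P.-integrable setT (EFin \o F q').
  set r := d q' o.
  set G := fun w => r * 4 * tau_deriv tau (u o w) + r * derive1 tau (2 * r).
  have iG : P.-integrable setT (EFin \o G).
    by apply: intD; [apply: intZ | apply: intC].
  apply: (le_integrable measurableT (g := EFin \o G)); last exact: iG.
    exact/measurable_EFinP.
  move=> w _ /=; rewrite lee_fin.
  apply: le_trans (ler_norm _); rewrite /G /F.
  have := lipb Htau (u0 o w) (u0 q' w) (r := r).
  have H1 := dtri (Y w) q' o; have H2 := dtri (Y w) o q'.
  rewrite (dsym o q') -/r in H2; rewrite -/r in H1.
  have : `|u q' w - u o w| <= r by rewrite ler_norml; rewrite /u -/r; lra.
  move=> H3 /(_ H3); lra.
pose H w := hh tau (Num.max (u m w) (u q w)).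
have Dab w : D <= u m w + u q w.
  by have := dtri q (Y w) m; rewrite (dsym q (Y w)) -/D /u; lra.
have maxD w : D / 2 <= Num.max (u m w) (u q w).
  have := Dab w; rewrite /u => Da.
  case: (leP (d (Y w) m) (d (Y w) q)) => ab.
    lra.
  lra.
have Hge0 w : 0 <= H w.
  by apply: (hh_ge0 Htau); apply: lt_le_trans (maxD w); lra.
have mH : measurable_fun setT H.
  pose ht x := hh tau (Num.max x (D / 2)).
  have mht : measurable_fun setT ht.
    apply: nonincreasing_measurable => // x y xy.
    apply: (hh_noninc Htau).
      by apply: lt_le_trans (_ : D / 2 <= _); [lra | rewrite le_max lexx orbT].
    exact: le_max2.
  have -> : H = ht \o (u m \max u q).
    by apply/funext => w; rewrite /ht /H /= (max_l (maxD w)).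
  by apply: measurableT_comp => //; apply: measurable_maxr.
have step : forall k : nat, exists c : Q, forall w,
   (2^-1 : R) ^+ k.+1 * (1 - (2^-1) ^+ k.+1) * (D ^+ 2 / 2) * H w <=
   (2^-1) ^+ k.+1 * (F q w - F m w) - (F c w - F m w).
  move=> k; have [c Hc] := geo Hh m q k.+1; exists c => w.
  set t : R := (2^-1) ^+ k.+1.
  have t0 : 0 < t by rewrite /t exprn_gt0 // invr_gt0.
  have t1 : t < 1 by rewrite /t exprn_ilt1 // ?invr_ge0 ?invf_lt1 //; lra.
  have T1 : u m w <= u q w + D by exact: dtri.
  have T2 : u q w <= u m w + D by rewrite /D dsym; exact: dtri.
  have := key Htau (u0 m w) (u0 q w) (u0 c w) D0 T1 T2 (Dab w)
    (ltac:(apply/andP; split; lra) : 0 < t < 1) (Hc (Y w)).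
  by rewrite /F /H; lra.
have iH : P.-integrable setT (EFin \o H).
  have [c Hc] := step 0%N.
  set t : R := (2^-1) ^+ 1 in Hc.
  have t0 : 0 < t by rewrite /t expr1 invr_gt0.
  have t1 : t < 1 by rewrite /t expr1 invf_lt1; lra.
  set K := t * (1 - t) * (D ^+ 2 / 2) in Hc.
  have D2 : 0 < D ^+ 2 / 2 by rewrite divr_gt0 // exprn_gt0.
  have K0 : 0 < K by rewrite /K; apply: mulr_gt0 => //; apply: mulr_gt0; lra.
  pose g w := K^-1 * (t * (F q w - F m w) - (F c w - F m w)).
  have ig : P.-integrable setT (EFin \o g).
    by apply: intZ; apply: intB; [apply: intZ|]; apply: intB.
  apply: (le_integrable measurableT (g := EFin \o g)); last exact: ig.
    exact/measurable_EFinP.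
  move=> w _ /=; rewrite lee_fin ger0_norm //.
  apply: le_trans (ler_norm _); rewrite /g ler_pdivlMl //.
set RI := Rintegral P setT.
have ineq : forall k : nat,
    (1 - (2^-1) ^+ k.+1) * ((D ^+ 2 / 2) * RI H) <= RI (F q) - RI (F m).
  move=> k; have [c Hc] := step k.
  set t : R := (2^-1) ^+ k.+1 in Hc *.
  have t0 : 0 < t by rewrite /t exprn_gt0 // invr_gt0.
  have L := le_Rintegral measurableT
     (intZ (t * (1 - t) * (D ^+ 2 / 2)) iH)
     (intB (intZ t (intB (iF q) (iF m))) (intB (iF c) (iF m))) (fun w _ => Hc w).
  rewrite (RintegralZl (t * (1 - t) * (D ^+ 2 / 2)) measurableT iH) in L.
  rewrite (RintegralB measurableT (intZ t (intB (iF q) (iF m))) (intB (iF c) (iF m))) in L.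
  rewrite (RintegralZl (t) measurableT (intB (iF q) (iF m))) in L.
  rewrite (RintegralB measurableT (iF q) (iF m)) in L.
  rewrite (RintegralB measurableT (iF c) (iF m)) in L.
  have em : (\int[P]_w (tau (d (Y w) m) - tau (d (Y w) o))%:E)%E = (RI (F m))%:E
    := intE (iF m).
  have ec : (\int[P]_w (tau (d (Y w) c) - tau (d (Y w) o))%:E)%E = (RI (F c))%:E
    := intE (iF c).
  have := Hmin c; rewrite em ec lee_fin => Mn.
  have : t * ((1 - t) * ((D ^+ 2 / 2) * RI H)) <= t * (RI (F q) - RI (F m)).
    have -> : t * ((1 - t) * ((D ^+ 2 / 2) * RI H)) = t * (1 - t) * (D ^+ 2 / 2) * RI H by ring.
    rewrite -/RI in L; lra.
  by rewrite ler_pM2l.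
have K0 : 0 <= (D ^+ 2 / 2) * RI H.
  apply: mulr_ge0; first by rewrite divr_ge0 // sqr_ge0.
  by apply: Rintegral_ge0 => w _; exact: Hge0.
have KX := lim_half K0 ineq.
have e2 : (\int[P]_w (rderiv (tau_deriv tau) (Num.max (d (Y w) m) (d (Y w) q)))%:E)%E
    = (RI H)%:E := intE iH.
have e3 : (\int[P]_w (tau (d (Y w) q) - tau (d (Y w) m))%:E)%E
    = (RI (fun w => F q w - F m w))%:E.
  rewrite -(intE (intB (iF q) (iF m))).
  by apply: eq_integral => w _; rewrite /F; congr (_%:E); ring.
rewrite e2 e3 -EFinM lee_fin.
rewrite /RI (RintegralB measurableT (iF q) (iF m)) -/RI.
rewrite (_ : 2^-1 * D ^+ 2 = D ^+ 2 / 2); last by rewrite mulrC.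
exact: KX.
Qed.
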